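(* Let $K$ be a field. For arbitrary integers $r \geq 1$ and $s \geq 1$, there exist an integer $n$ and a monomial ideal $I$ of the polynomial ring $S = K[x_1, \ldots, x_n]$ (with each $\deg x_i = 1$) such that $\operatorname{reg}(S/I) = r$ and $\deg h_{S/I}(\lambda) = s$.
   Context: For a homogeneous ideal $I$ of $S = K[x_1,\ldots,x_n]$ (standard grading) with $\dim S/I = d$, the Hilbert series of $S/I$ can be written uniquely as $H_{S/I}(\lambda) = h_{S/I}(\lambda)/(1-\lambda)^d$ with $h_{S/I}(\lambda) = h_0 + h_1\lambda + \cdots + h_s\lambda^s \in \mathbb{Z}[\lambda]$, $h_s \neq 0$; $h_{S/I}(\lambda)$ is called the $h$-polynomial of $S/I$. $\operatorname{reg}(S/I)$ denotes the Castelnuovo--Mumford regularity of $S/I$. *)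

(* Defs.v *)
From HB Require Import structures.
From mathcomp Require Import all_boot all_order all_algebra.
Set Implicit Arguments. Unset Strict Implicit. Unset Printing Implicit Defensive.
Import Order.TTheory GRing.Theory Num.Theory.
Local Open Scope ring_scope.

(* A monomial x^a of S = K[x_1..x_n] is encoded by its exponent vector
   a : {ffun 'I_n -> nat}.  A monomial ideal I of S is encoded by a finite
   list G of monomial generators (every monomial ideal is finitely
   generated, Dickson's lemma).  The monomial x^a lies in I = (G) iff some
   generator divides it. *)
Definition expvec (n : nat) := {ffun 'I_n -> nat}.

Definition mdivides n (g a : expvec n) : bool := [forall i, (g i <= a i)%N].

Definition in_mideal n (G : seq (expvec n)) (a : expvec n) : bool :=
  has (fun g => mdivides g a) G.

Definition mdeg n (a : expvec n) : nat := (\sum_(i < n) a i)%N.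

(* dim_K (S/I)_k = number of monomials of degree k not in I
   (the standard monomials form a K-basis of S/I). *)
Definition hilbf n (G : seq (expvec n)) (k : nat) : nat :=
  #|[set a : {ffun 'I_n -> 'I_k.+1} |
      ((\sum_(i < n) (a i : nat))%N == k) &&
      ~~ in_mideal G [ffun i => (a i : nat)]]|.

(* Krull dimension of S/I for a monomial ideal I: the largest #|F| such that
   the monomial prime (x_i : i \notin F) contains I, i.e. no generator of I
   is supported inside F. *)
Definition mindep n (G : seq (expvec n)) (F : {set 'I_n}) : bool :=
  ~~ has (fun g : expvec n => [forall i, (0 < g i)%N ==> (i \in F)]) G.

Definition krull_dim n (G : seq (expvec n)) (d : nat) : Prop :=
  (exists F : {set 'I_n}, mindep G F /\ #|F| = d) /\
  (forall F : {set 'I_n}, mindep G F -> (#|F| <= d)%N).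

(* h is the h-polynomial of S/I: with d = dim S/I,
   H_{S/I}(lambda) * (1 - lambda)^d = h(lambda) as formal power series,
   i.e. h_m = \sum_{j <= min(m,d)} (-1)^j C(d,j) H(S/I, m - j) for all m. *)
Definition is_hpoly n (G : seq (expvec n)) (h : {poly int}) : Prop :=
  exists d : nat, krull_dim G d /\
    forall m : nat,
      h`_m = \sum_(j < (minn m d).+1)
               (-1) ^+ j * ('C(d, j))%:Z * (hilbf G (m - j)%N)%:Z.

(* Graded Betti numbers beta_{i,b}(S/I) = dim_K Tor_i^S(S/I, K)_b, computed
   as the multidegree-b part of the Koszul homology H_i(x_1..x_n; S/I)
   (the Koszul complex resolves K).  In multidegree b, the Koszul chain
   group K_i(x; S/I)_b has K-basis the elements x^(b - 1_F) e_F with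
   #|F| = i, F inside supp b and x^(b - 1_F) \notin I. *)
Definition kvalid n (G : seq (expvec n)) (b : expvec n) (F : {set 'I_n}) : bool :=
  [forall k in F, (0 < b k)%N] &&
  ~~ in_mideal G [ffun k => (b k - (k \in F))%N].

(* matrix (row-vector convention) of the Koszul differential
   d_i : K_i(x;S/I)_b -> K_{i-1}(x;S/I)_b, with rows/columns indexed by all
   subsets of 'I_n (entries for non-basis subsets are 0):
   d(m e_F) = \sum_{k in F} (-1)^{#{l in F, l < k}} x_k m e_{F \ k}. *)
Definition kdiff (K : fieldType) n (G : seq (expvec n)) (b : expvec n) (i : nat)
  : 'M[K]_(#|{set 'I_n}|) :=
  \matrix_(p, q)
    (let F : {set 'I_n} := enum_val p in let H : {set 'I_n} := enum_val q in
     if [&& #|F| == i, kvalid G b F & kvalid G b H] then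
       \sum_(k in F) (if H == F :\ k
                      then (-1) ^+ #|[set l in F | (l < k)%N]| else 0)
     else 0).

Definition betti (K : fieldType) n (G : seq (expvec n)) (i : nat) (b : expvec n)
  : nat :=
  (#|[set F : {set 'I_n} | (#|F| == i) && kvalid G b F]|
     - \rank (kdiff K G b i) - \rank (kdiff K G b i.+1))%N.

Definition is_reg (K : fieldType) n (G : seq (expvec n)) (r : int) : Prop :=
  (exists (i : nat) (b : expvec n),
      betti K G i b <> 0%N /\ (mdeg b)%:Z - i%:Z = r) /\
  (forall (i : nat) (b : expvec n),
      betti K G i b <> 0%N -> (mdeg b)%:Z - i%:Z <= r).

(* Main.v *)
Require Import Defs.
From HB Require Import structures.
From mathcomp Require Import all_boot all_order all_algebra.
From mathcomp Require Import zify.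
Set Implicit Arguments. Unset Strict Implicit. Unset Printing Implicit Defensive.
Import Order.TTheory GRing.Theory Num.Theory.
Local Open Scope ring_scope.

Lemma rank_diag_lb (F : fieldType) N m (A : 'M[F]_N) (f g : 'I_m -> 'I_N) :
  (forall j, A (f j) (g j) != 0) -> (forall j k, j != k -> A (f j) (g k) = 0) ->
  (m <= \rank A)%N.
Proof.
move=> Hd Ho.
pose P : 'M[F]_(m, N) := \matrix_(j, l) (f j == l)%:R.
pose Q : 'M[F]_(N, m) := \matrix_(l, k) (l == g k)%:R.
pose d : 'rV[F]_m := \row_j A (f j) (g j).
have E : P *m A *m Q = diag_mx d.
  apply/matrixP => j k; rewrite !mxE.
  rewrite (bigD1 (g k)) //= big1 ?addr0; last first.
    by move=> l /negPf nl; rewrite !mxE nl mulr0.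
  rewrite !mxE eqxx mulr1 (bigD1 (f j)) //= big1 ?addr0; last first.
    by move=> l nl; rewrite !mxE eq_sym (negPf nl) mul0r.
  rewrite !mxE eqxx mul1r.
  have [->|njk] := eqVneq j k; first by rewrite mulr1n.
  by rewrite Ho // mulr0n.
have U : diag_mx d \in unitmx.
  rewrite unitmxE det_diag unitfE; apply/prodf_neq0 => j _; rewrite mxE; exact: Hd.
rewrite -(mxrank_unit U) -E.
apply: leq_trans (mxrankM_maxl _ _) _.
exact: mxrankM_maxr.
Qed.


Definition basisK n (G : seq (expvec n)) (b : expvec n) (i : nat) :=
  [set F : {set 'I_n} | (#|F| == i) && kvalid G b F].

Lemma in_mideal_mono n (G : seq (expvec n)) (c c' : expvec n) :
  (forall i, (c i <= c' i)%N) -> in_mideal G c -> in_mideal G c'.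
Proof.
move=> le /hasP [g gG /forallP dg]; apply/hasP; exists g => //.
by apply/forallP => i; exact: leq_trans (dg i) (le i).
Qed.

Lemma kdiff_E (K : fieldType) n (G : seq (expvec n)) (b : expvec n) (i : nat) (F H : {set 'I_n}) :
  kdiff K G b i (enum_rank F) (enum_rank H) =
  if [&& #|F| == i, kvalid G b F & kvalid G b H] then
       \sum_(k in F) (if H == F :\ k
                      then (-1) ^+ #|[set l in F | (l < k)%N]| else 0)
     else 0.
Proof. by rewrite /kdiff mxE !enum_rankK. Qed.

Lemma sum_cone (K : fieldType) n (F H : {set 'I_n}) v (s : 'I_n -> K) :
  v \in F -> v \notin H ->
  \sum_(k in F) (if H == F :\ k then s k else 0) = if H == F :\ v then s v else 0.
Proof.
move=> vF vH; rewrite (bigD1 v) //= big1 ?addr0 // => k /andP[kF nkv].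
case: eqP => // HE; exfalso; move/negP: vH; apply.
by rewrite HE in_setD1 eq_sym nkv.
Qed.

Lemma rank_cone (K : fieldType) n (G : seq (expvec n)) (b : expvec n) (i : nat) (v : 'I_n) (m : nat)
  (R : 'I_m -> {set 'I_n}) :
  (forall j, v \in R j) -> injective (fun j => R j :\ v) ->
  (forall j, [&& #|R j| == i, kvalid G b (R j) & kvalid G b (R j :\ v)]) ->
  (m <= \rank (kdiff K G b i))%N.
Proof.
move=> vR injR cR.
apply: (@rank_diag_lb _ _ _ _ (fun j => enum_rank (R j))
                           (fun k => enum_rank (R k :\ v))).
  move=> j; rewrite kdiff_E cR (@sum_cone _ _ _ _ v) ?vR ?setD11 // eqxx.
  by rewrite expf_neq0 // oppr_eq0 oner_eq0.
move=> j k njk; rewrite kdiff_E; case: ifP => // _.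
rewrite (@sum_cone _ _ _ _ v) ?vR ?setD11 //; case: eqP => // E.
by move/injR: E => E; rewrite E eqxx in njk.
Qed.

Lemma kvalid_mono n (G : seq (expvec n)) (b : expvec n) (F F' : {set 'I_n}) :
  F \subset F' -> [forall k in F', (0 < b k)%N] -> kvalid G b F -> kvalid G b F'.
Proof.
move=> sFF' pos /andP[_ nI]; rewrite /kvalid pos /=.
apply: contra nI; apply: in_mideal_mono => k; rewrite !ffunE.
apply: leq_sub2l; case kF: (k \in F) => //.
by rewrite (subsetP sFF' _ kF).
Qed.

Lemma betti_cone (K : fieldType) n (G : seq (expvec n)) (b : expvec n) (i : nat) (v : 'I_n) :
  (0 < b v)%N ->
  (forall F, F \in basisK G b i -> v \in F -> kvalid G b (F :\ v)) ->
  betti K G i b = 0%N.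
Proof.
move=> bv Hc.
set A := basisK G b i.
pose A1 := A :&: [set F : {set 'I_n} | v \in F].
pose A2 := A :\: [set F : {set 'I_n} | v \in F].
have r1 : (#|A1| <= \rank (kdiff K G b i))%N.
  have RA (j : 'I_#|A1|) : (enum_val j : {set 'I_n}) \in A1 by exact: enum_valP.
  apply: (@rank_cone _ _ _ _ _ v _ (fun j : 'I_#|A1| => (enum_val j : {set 'I_n}))).
  - by move=> j; have := RA j; rewrite !inE => /andP[_ ->].
  - move=> j k /= E; apply: enum_val_inj.
    have := RA j; have := RA k; rewrite !inE => /andP[_ vk] /andP[_ vj].
    by rewrite -(setD1K vj) -(setD1K vk) E.
  - move=> j; have := RA j; rewrite !inE => /andP[/andP[-> ->] vj] /=.
    by apply: Hc => //; have := RA j; rewrite !inE => /andP[-> _].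
have r2 : (#|A2| <= \rank (kdiff K G b i.+1))%N.
  pose R := fun j : 'I_#|A2| => v |: (enum_val j : {set 'I_n}).
  have RA (j : 'I_#|A2|) : (enum_val j : {set 'I_n}) \in A2 by exact: enum_valP.
  have RK j : R j :\ v = enum_val j.
    by apply: setU1K; have := RA j; rewrite !inE => /andP[-> _].
  apply: (@rank_cone _ _ _ _ _ v _ R).
  - by move=> j; rewrite setU11.
  - by move=> j k /=; rewrite !RK => /enum_val_inj.
  - move=> j; rewrite RK; have := RA j; rewrite !inE => /andP[nv /andP[/eqP ci kv]].
    rewrite cardsU1 nv ci eqxx kv /= andbT.
    apply: (kvalid_mono _ _ kv); first by apply/subsetP => x xF; rewrite setU1r.
    apply/forallP => k; apply/implyP; rewrite in_setU1 => /orP[/eqP -> //|kF].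
    by move: kv => /andP[/forallP /(_ k) /implyP /(_ kF)].
rewrite /betti -/A -subnDA; apply/eqP; rewrite subn_eq0.
by rewrite -(cardsID [set F : {set 'I_n} | v \in F] A) leq_add.
Qed.


Lemma sum_in_card n (F : {set 'I_n}) : (\sum_(i < n) (i \in F : nat))%N = #|F|.
Proof.
rewrite -sum1_card [in RHS]big_mkcond /=; apply: eq_bigr => i _.
by case: (i \in F).
Qed.

Lemma mdeg_sub n (b : expvec n) (F : {set 'I_n}) :
  [forall k in F, (0 < b k)%N] ->
  mdeg [ffun k => (b k - (k \in F))%N] = (mdeg b - #|F|)%N.
Proof.
move=> /forall_inP pos; rewrite /mdeg -sum_in_card.
have -> : (\sum_(i < n) b i = \sum_(i < n) ([ffun k => (b k - (k \in F))%N] i + (i \in F)))%N.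
  apply: eq_bigr => i _; rewrite ffunE subnK //.
  by case iF: (i \in F) => //; exact: pos.
by rewrite big_split /= addnK.
Qed.

Lemma reg_ub (K : fieldType) n (G : seq (expvec n)) (r : nat) (W : pred 'I_n) :
  (forall c : expvec n, ~~ in_mideal G c -> (r < mdeg c)%N -> exists2 v, W v & (0 < c v)%N) ->
  (forall (c : expvec n) v, ~~ in_mideal G c -> (r < mdeg c)%N -> W v ->
       ~~ in_mideal G [ffun k => (c k + (k == v))%N]) ->
  forall (i : nat) (b : expvec n), betti K G i b <> 0%N ->
     (mdeg b)%:Z - i%:Z <= r%:Z.
Proof.
move=> H1 H2 i b Hb; rewrite lerBlDr -PoszD lez_nat.
case: (leqP (mdeg b) (r + i)) => // lt; exfalso; apply: Hb.
case: (set_0Vmem (basisK G b i)) => [A0|[F0 F0A]].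
  by rewrite /betti -/(basisK G b i) A0 cards0.
move: (F0A); rewrite inE => /andP[/eqP cF0 /andP[pos0 nI0]].
have dc0 : (r < mdeg [ffun k => (b k - (k \in F0))%N])%N.
  by rewrite mdeg_sub // cF0 ltn_subRL addnC.
have [v Wv cv] := H1 _ nI0 dc0.
have bv : (0 < b v)%N by move: cv; rewrite ffunE => /leq_trans; apply; exact: leq_subr.
apply: (@betti_cone _ _ _ _ _ v bv) => F; rewrite inE => /andP[/eqP cF /andP[pos nI]] vF.
rewrite /kvalid; apply/andP; split.
  apply/forall_inP => k; rewrite in_setD1 => /andP[_ kF].
  by move/forall_inP: pos; apply.
have dc : (r < mdeg [ffun k => (b k - (k \in F))%N])%N.
  by rewrite mdeg_sub // cF ltn_subRL addnC.
have := H2 _ v nI dc Wv.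
have -> : [ffun k => (b k - (k \in F :\ v))%N] =
          [ffun k => ([ffun k => (b k - (k \in F))%N] k + (k == v))%N].
  apply/ffunP => k; rewrite !ffunE in_setD1.
  have [->|nkv] := eqVneq k v; last by rewrite addn0.
  by rewrite /= subn0 vF addn1 subn1 prednK.
by [].
Qed.

Lemma betti_pure (K : fieldType) n (G : seq (expvec n)) (v : 'I_n) (m : nat) :
  in_mideal G [ffun k => if k == v then m.+1 else 0%N] ->
  ~~ in_mideal G [ffun k => if k == v then m else 0%N] ->
  betti K G 1 [ffun k => if k == v then m.+1 else 0%N] = 1%N.
Proof.
set b := [ffun k => _] => Ib nIm.
have supp F : kvalid G b F -> F \subset [set v].
  move=> /andP[/forall_inP pos _]; apply/subsetP => k kF; rewrite inE.
  by have := pos k kF; rewrite ffunE; case: eqP.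
have B : basisK G b 1 = [set [set v]].
  apply/setP => F; rewrite !inE; apply/idP/idP.
    move=> /andP[/cards1P [x ->] kv]; have := supp _ kv.
    by rewrite sub1set inE => /eqP ->.
  move=> /eqP ->; rewrite cards1 /= /kvalid; apply/andP; split.
    by apply/forall_inP => k; rewrite inE => /eqP ->; rewrite ffunE eqxx.
  apply: contra nIm => H; apply: (in_mideal_mono _ H) => k; rewrite !ffunE inE.
  by case: eqP => // _; rewrite subn1.
have R1 : kdiff K G b 1 = 0.
  apply/matrixP => p q; rewrite !mxE /=; case: ifP => // /and3P[/eqP cF _ kH].
  apply: big1 => k kF; case: eqP => // HE; exfalso.
  have H0 : enum_val q = set0.
    apply: cards0_eq; rewrite HE; move: cF; rewrite (cardsD1 k) kF.
    by rewrite add1n => -[].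
  move: kH; rewrite H0 /kvalid => /andP[_]; apply/negP; rewrite negbK.
  by apply: (in_mideal_mono _ Ib) => j; rewrite !ffunE inE subn0.
have R2 : kdiff K G b 2 = 0.
  apply/matrixP => p q; rewrite !mxE /=; case: ifP => // /and3P[/eqP cF kF _].
  by have := subset_leq_card (supp _ kF); rewrite cards1 cF.
by rewrite /betti -/(basisK G b 1) B cards1 R1 R2 mxrank0.
Qed.

Lemma mdeg_pure n (v : 'I_n) (m : nat) :
  mdeg [ffun k => if k == v then m else 0%N] = m.
Proof.
rewrite /mdeg (bigD1 v) //= ffunE eqxx big1 ?addn0 // => k nk.
by rewrite ffunE (negPf nk).
Qed.

Lemma is_reg_gen (K : fieldType) n (G : seq (expvec n)) (r : nat) (W : pred 'I_n) (v : 'I_n) :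
  (forall c : expvec n, ~~ in_mideal G c -> (r < mdeg c)%N -> exists2 v, W v & (0 < c v)%N) ->
  (forall (c : expvec n) v, ~~ in_mideal G c -> (r < mdeg c)%N -> W v ->
       ~~ in_mideal G [ffun k => (c k + (k == v))%N]) ->
  in_mideal G [ffun k => if k == v then r.+1 else 0%N] ->
  ~~ in_mideal G [ffun k => if k == v then r else 0%N] ->
  is_reg K G r%:Z.
Proof.
move=> H1 H2 I1 I2; split; last exact: reg_ub H1 H2.
exists 1%N, [ffun k => if k == v then r.+1 else 0%N]; split.
  by rewrite betti_pure.
by rewrite mdeg_pure -addn1 PoszD addrK.
Qed.


Definition Dl (H : nat -> int) (m : nat) : int :=
  if m is m'.+1 then H m - H m' else H 0%N.

Definition Ssum (e : nat) (H : nat -> int) (m : nat) : int :=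
  \sum_(j < (minn m e).+1) (-1) ^+ j * ('C(e, j))%:Z * H (m - j)%N.

Lemma Ssum_full e H m :
  Ssum e H m = \sum_(j < m.+1) (-1) ^+ j * ('C(e, j))%:Z * H (m - j)%N.
Proof.
have le : ((minn m e).+1 <= m.+1)%N by rewrite ltnS geq_minl.
rewrite /Ssum (big_ord_widen _ (fun j => (-1) ^+ j * ('C(e, j))%:Z * H (m - j)%N) le).
rewrite big_mkcond /=; apply: eq_bigr => j _; case: ifP => // /negbT hj.
have je : (e < j)%N.
  move: hj; rewrite ltnS leq_min negb_and => /orP[|]; rewrite -ltnNge //.
  by move=> lt; move: (ltn_ord j); rewrite ltnS leqNgt lt.
by rewrite bin_small // mulr0 mul0r.
Qed.

Lemma Ssum0 H m : Ssum 0 H m = H m.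
Proof.
rewrite Ssum_full big_ord_recl /= big1 ?addr0 ?subn0 ?mul1r //.
by move=> i _; rewrite bin0n /= mulr0 mul0r.
Qed.

Lemma Ssum_S e H m : Ssum e.+1 H m = Dl (Ssum e H) m.
Proof.
case: m => [|m].
  by rewrite /= !Ssum_full !big_ord_recl !big_ord0 /= !bin0 !addr0.
rewrite /Dl !Ssum_full big_ord_recl /= bin0 expr0 mul1r mul1r subn0.
under eq_bigr => i _ do rewrite /bump /= add1n subSS binS PoszD mulrDr mulrDl.
rewrite big_split /= addrA; apply: f_equal2.
  by rewrite [in RHS]big_ord_recl /= bin0 expr0 !mul1r subn0.
rewrite -sumrN.
by apply: eq_bigr => i _; rewrite exprS !mulN1r !mulNr.
Qed.

Lemma Dl_ext F F' m : (forall x, F x = F' x) -> Dl F m = Dl F' m.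
Proof. by move=> E; case: m => [|m] /=; rewrite ?E. Qed.

Lemma Ssum_ext e F F' m : (forall x, F x = F' x) -> Ssum e F m = Ssum e F' m.
Proof. by move=> E; apply: eq_bigr => j _; rewrite E. Qed.

Lemma Ssum_Sr e H m : Ssum e.+1 H m = Ssum e (Dl H) m.
Proof.
elim: e H m => [|e IH] H m; first by rewrite Ssum_S Ssum0; apply: Dl_ext => x; rewrite Ssum0.
rewrite Ssum_S (Ssum_S e); apply: Dl_ext => x; exact: IH.
Qed.

Lemma SsumD e F F' m : Ssum e (fun k => F k + F' k) m = Ssum e F m + Ssum e F' m.
Proof. by rewrite /Ssum -big_split; apply: eq_bigr => j _; rewrite mulrDr. Qed.

Lemma Dl_coef (q : {poly int}) m : Dl (fun k => q`_k) m = ((1 - 'X) * q)`_m.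
Proof.
by rewrite mulrBl mul1r coefB coefXM; case: m => [|m] //=; rewrite subr0.
Qed.

Lemma Ssum_coef e (q : {poly int}) m : Ssum e (fun k => q`_k) m = ((1 - 'X) ^+ e * q)`_m.
Proof.
elim: e m => [|e IH] m; first by rewrite Ssum0 expr0 mul1r.
rewrite Ssum_S (@Dl_ext _ (fun k => ((1 - 'X) ^+ e * q)`_k)) //.
by rewrite Dl_coef exprS mulrA.
Qed.

Lemma Dl_bin w k : Dl (fun k => ('C(w.+1 + k, w.+1))%:Z) k = ('C(w + k, w))%:Z.
Proof.
case: k => [|k] /=; first by rewrite !addn0 !binn.
by rewrite addnS binS PoszD addrC addKr addSnnS.
Qed.

Lemma Ssum_bin w m : Ssum w.+1 (fun k => ('C(w + k, w))%:Z) m = (m == 0%N)%:Z.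
Proof.
elim: w m => [|w IH] m.
  rewrite Ssum_S (@Dl_ext _ (fun _ => 1)); last by move=> x; rewrite Ssum0 add0n bin0.
  by case: m.
rewrite Ssum_Sr -IH; apply: Ssum_ext => x; exact: Dl_bin.
Qed.

Definition cnt e k := #|[set b : {ffun 'I_e -> 'I_k.+1} | (\sum_(i < e) (b i : nat) == k)%N]|.

Lemma cnt_bin w k : cnt w.+1 k = 'C(w + k, w).
Proof.
rewrite -card_ord_partitions /cnt.
pose f := fun t : w.+1.-tuple 'I_k.+1 => [ffun i => tnth t i].
have injf : injective f.
  by move=> t1 t2 E; apply: eq_from_tnth => i; move/ffunP: E => /(_ i); rewrite !ffunE.
rewrite -(card_imset _ injf).
suff -> : [set b : {ffun 'I_w.+1 -> 'I_k.+1} | (\sum_(i < w.+1) (b i : nat) == k)%N] =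
  f @: [set t : w.+1.-tuple 'I_k.+1 | (\sum_(i <- t) (i : nat) == k)%N] by [].
apply/setP => a; rewrite inE.
apply/idP/imsetP.
  move=> Ha; exists [tuple a i | i < w.+1].
    by rewrite inE big_tuple; under eq_bigr => i _ do rewrite tnth_mktuple.
  by apply/ffunP => i; rewrite ffunE tnth_mktuple.
move=> [t]; rewrite inE => Ht ->; rewrite big_tuple in Ht.
by under eq_bigr => i _ do rewrite ffunE.
Qed.

Lemma cnt0 k : cnt 0 k = (k == 0%N).
Proof.
rewrite /cnt; case: k => [|k].
  rewrite (_ : [set _ | _] = setT) ?cardsT ?card_ffun ?card_ord ?expn0 //.
  by apply/setP => b; rewrite !inE big_ord0.
rewrite (_ : [set _ | _] = set0) ?cards0 //.
by apply/setP => b; rewrite !inE big_ord0.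
Qed.

Lemma Ssum_cnt e m : Ssum e (fun k => (cnt e k)%:Z) m = (m == 0%N)%:Z.
Proof.
case: e => [|w]; first by rewrite Ssum0 cnt0.
rewrite -(Ssum_bin w); apply: Ssum_ext => x; by rewrite cnt_bin.
Qed.


Lemma lift0F n (j : 'I_n) : (lift ord0 j == ord0) = false.
Proof. by apply/negP => /eqP E; have := neq_lift ord0 j; rewrite E eqxx. Qed.

Definition gA0 e a : expvec e.+1 := [ffun i => if i == ord0 then a.+1 else 0%N].
Definition gAj e (j : 'I_e) : expvec e.+1 := [ffun i => ((i == ord0) + (i == lift ord0 j))%N].
Definition GA e a : seq (expvec e.+1) := gA0 e a :: [seq gAj j | j <- enum 'I_e].

Lemma inA e a (c : expvec e.+1) :
  in_mideal (GA e a) c =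
  (a.+1 <= c ord0)%N || ((0 < c ord0)%N && [exists j : 'I_e, (0 < c (lift ord0 j))%N]).
Proof.
rewrite /in_mideal /= has_map; congr (_ || _).
  apply/forallP/idP => [/(_ ord0)|h i]; first by rewrite ffunE eqxx.
  by rewrite ffunE; case: eqP => [->|].
apply/hasP/andP.
  move=> [j _ /forallP d]; split.
    by have := d ord0; rewrite ffunE eqxx.
  apply/existsP; exists j; have := d (lift ord0 j).
  by rewrite ffunE eqxx lift0F.
move=> [c0 /existsP [j cj]]; exists j; first by rewrite mem_enum.
apply/forallP => i; rewrite ffunE /=.
have [->|ni0] := eqVneq i ord0.
  by rewrite (negPf (neq_lift _ _)).
by case: eqP => [->|] //.
Qed.

Lemma mdegS e (c : expvec e.+1) :
  mdeg c = (c ord0 + \sum_(j < e) c (lift ord0 j))%N.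
Proof. by rewrite /mdeg big_ord_recl. Qed.

Lemma nA_big e a (c : expvec e.+1) :
  ~~ in_mideal (GA e a) c -> (a < mdeg c)%N -> c ord0 = 0%N /\ [exists j : 'I_e, (0 < c (lift ord0 j))%N].
Proof.
rewrite inA negb_or -leqNgt => /andP[ca nc] dc.
have E : [exists j : 'I_e, (0 < c (lift ord0 j))%N].
  apply: contraT => nz.
  have z j : c (lift ord0 j) = 0%N.
    apply/eqP; rewrite -leqn0 leqNgt; apply/negP => h.
    by move/existsP: nz; apply; exists j.
  move: dc; rewrite mdegS big1 ?addn0 => [|j _]; last exact: z.
  by rewrite ltnNge ca.
split => //; move: nc; rewrite E andbT lt0n negbK.
by move/eqP.
Qed.

Lemma regA (K : fieldType) e a : is_reg K (GA e a) a%:Z.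
Proof.
apply: (@is_reg_gen _ _ _ _ (fun i => i != ord0) ord0).
- move=> c nc dc; have [_ /existsP [j cj]] := nA_big nc dc.
  by exists (lift ord0 j) => //; rewrite eq_sym neq_lift.
- move=> c v nc dc nv; rewrite /= in nv; have [c0 _] := nA_big nc dc.
  rewrite inA !ffunE c0 eq_sym (negPf nv) /=.
  by [].
- by rewrite inA ffunE eqxx leqnn.
- rewrite inA ffunE eqxx ltnn /=; apply/negP => /andP[_ /existsP [j]].
  by rewrite ffunE eq_sym (negPf (neq_lift _ _)).
Qed.

Lemma krullA e a : krull_dim (GA e a) e.
Proof.
have gpos g : g \in GA e a -> (0 < g ord0)%N.
  rewrite inE => /orP[/eqP ->|/mapP [j _ ->]]; rewrite ffunE eqxx //.
split.
  exists [set~ ord0]; split; last by rewrite cardsC1 card_ord.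
  apply/hasPn => g gG; apply/negP => /forallP /(_ ord0).
  by rewrite gpos //= !inE eqxx.
move=> F; rewrite /mindep => /hasPn /(_ (gA0 e a)) /=.
rewrite inE eqxx /= => /(_ isT) H.
have nF : ord0 \notin F.
  apply: contra H => H; apply/forallP => i; apply/implyP.
  by rewrite ffunE; case: eqP => [->|].
have : F \subset [set~ ord0].
  by apply/subsetP => i iF; rewrite !inE; apply: contraNneq nF => <-.
by move/subset_leq_card; rewrite cardsC1 card_ord.
Qed.


Lemma hilbA e a k : hilbf (GA e a) k = (cnt e k + ((0 < k) && (k <= a)))%N.
Proof.
rewrite /hilbf.
set S := [set x : {ffun 'I_e.+1 -> 'I_k.+1} | _].
set B := [set x : {ffun 'I_e.+1 -> 'I_k.+1} | (x ord0 : nat) == 0%N].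
have sumS (x : {ffun 'I_e.+1 -> 'I_k.+1}) :
    (\sum_(i < e.+1) (x i : nat) = x ord0 + \sum_(j < e) x (lift ord0 j))%N.
  by rewrite big_ord_recl.
rewrite -(cardsID B S); congr (_ + _)%N.
  pose f := fun y : {ffun 'I_e -> 'I_k.+1} =>
    [ffun i => if unlift ord0 i is Some j then y j else ord0].
  have injf : injective f.
    move=> y1 y2 E; apply/ffunP => j; move/ffunP: E => /(_ (lift ord0 j)).
    by rewrite !ffunE liftK.
  rewrite /cnt -(card_imset _ injf).
  suff -> : S :&: B = f @: [set y : {ffun 'I_e -> 'I_k.+1} | (\sum_(i < e) (y i : nat) == k)%N] by [].
  apply/setP => x; rewrite !inE; apply/idP/imsetP.
    move=> /andP[/andP[sx _] x0]; exists [ffun j => x (lift ord0 j)].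
      rewrite inE; under eq_bigr => j _ do rewrite ffunE.
      by move: sx; rewrite sumS (eqP x0) add0n.
    apply/ffunP => i; rewrite ffunE; case: unliftP => [j ->|->]; first by rewrite ffunE.
    by apply: val_inj; rewrite /= (eqP x0).
  move=> [y]; rewrite inE => sy ->.
  have f0 : f y ord0 = ord0 by rewrite ffunE unlift_none.
  have fl j : f y (lift ord0 j) = y j by rewrite ffunE liftK.
  rewrite f0 eqxx andbT sumS f0 add0n.
  under eq_bigr => j _ do rewrite fl.
  have v0 : [ffun i => (f y i : nat)] ord0 = 0%N by rewrite ffunE f0.
  by rewrite sy andTb inA v0.
pose xk : {ffun 'I_e.+1 -> 'I_k.+1} := [ffun i => if i == ord0 then ord_max else ord0].
have xk0 : xk ord0 = ord_max by rewrite ffunE eqxx.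
have xkl j : xk (lift ord0 j) = ord0 by rewrite ffunE lift0F.
have sub : S :\: B \subset [set xk].
  apply/subsetP => x; rewrite !inE => /andP[nx0 /andP[sx nI]].
  move: nI; rewrite inA !ffunE negb_or => /andP[_].
  rewrite lt0n nx0 /= => /existsP nz.
  have z j : (x (lift ord0 j) : nat) = 0%N.
    apply/eqP; rewrite -leqn0 leqNgt; apply/negP => h.
    by apply: nz; exists j; rewrite ffunE.
  move: sx; rewrite sumS big1 ?addn0 => [sx|j _]; last exact: z.
  apply/eqP/ffunP => i; case: (unliftP ord0 i) => [j ->|->].
    by rewrite xkl; apply: val_inj; rewrite /= z.
  by rewrite xk0; apply: val_inj; rewrite /= (eqP sx).
have xkin : (xk \in S :\: B) = (0 < k)%N && (k <= a)%N.
  rewrite !inE sumS xk0 big1 ?addn0 => [|j _]; last by rewrite xkl.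
  rewrite eqxx andTb.
  have v0 : [ffun i => (xk i : nat)] ord0 = k by rewrite ffunE xk0.
  have nex : [exists j : 'I_e, (0 < [ffun i => (xk i : nat)] (lift ord0 j))%N] = false.
    by apply/existsP => -[j]; rewrite ffunE xkl.
  rewrite inA v0 nex andbF orbF -ltnNge ltnS -lt0n.
  by [].
case C : ((0 < k)%N && (k <= a)%N) => /=.
  apply/eqP; rewrite eqn_leq; apply/andP; split.
    by rewrite -(cards1 xk); apply: subset_leq_card.
  by rewrite card_gt0; apply/set0Pn; exists xk; rewrite xkin.
apply/eqP; rewrite cards_eq0; apply/eqP/setP => x; rewrite in_set0; apply/negP => xin.
have := subsetP sub x xin; rewrite inE => /eqP xe; rewrite xe xkin in xin.
by rewrite xin in C.
Qed.


Definition qA a : {poly int} := \poly_(i < a.+1) ((i != 0%N)%:R).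
Definition hA e a : {poly int} := 1 + (1 - 'X) ^+ e * qA a.

Lemma coef_qA a k : (qA a)`_k = ((0 < k)%N && (k <= a)%N : nat)%:Z.
Proof.
rewrite coef_poly ltnS lt0n; case: (k <= a)%N; rewrite ?andbF ?andbT //.
by rewrite natz.
Qed.

Lemma hpolyA e a : is_hpoly (GA e a) (hA e a).
Proof.
exists e; split; first exact: krullA.
move=> m.
apply: (@eq_trans _ _ (Ssum e (fun k => (hilbf (GA e a) k)%:Z) m)); last by [].
rewrite (@Ssum_ext _ _ (fun k => (cnt e k)%:Z + (qA a)`_k)); last first.
  by move=> x; rewrite hilbA PoszD coef_qA.
by rewrite SsumD Ssum_cnt Ssum_coef /hA coefD coef1 natz.
Qed.

Lemma size_1X e : size ((1 - 'X : {poly int}) ^+ e) = e.+1.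
Proof.
have s1 : size (1 - 'X : {poly int}) = 2%N.
  by rewrite -opprB size_polyN -polyC1 size_XsubC.
elim: e => [|e IH]; first by rewrite expr0 size_poly1.
rewrite exprS size_mul ?s1 ?IH //.
  by rewrite -size_poly_eq0 s1.
by rewrite -size_poly_eq0 IH.
Qed.

Lemma size_hA e a : (0 < a)%N -> (size (hA e a)).-1 = (a + e)%N.
Proof.
move=> a0.
have sq : size (qA a) = a.+1.
  by rewrite size_poly_eq //= -lt0n a0 oner_eq0.
have sP : size ((1 - 'X) ^+ e * qA a) = (e + a).+1.
  rewrite size_mul ?size_1X ?sq ?addSn ?addnS //.
    by rewrite -size_poly_eq0 size_1X.
  by rewrite -size_poly_eq0 sq.
rewrite /hA addrC size_polyDl sP.
  by rewrite addnC.
by rewrite size_poly1 ltnS addn_gt0 a0 orbT.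
Qed.


Section FamB.
Variables (s p : nat).
Local Notation r := (s + p)%N.
Local Notation N := p.+2.

Definition yB : 'I_N := ord0.
Definition zB : 'I_N := lift ord0 ord0.
Definition xB (j : 'I_p) : 'I_N := lift ord0 (lift ord0 j).

Lemma xB_y j : (xB j == yB) = false.
Proof. exact: lift0F. Qed.
Lemma xB_z j : (xB j == zB) = false.
Proof. by rewrite /xB /zB (inj_eq (@lift_inj _ _)) lift0F. Qed.
Lemma z_y : (zB == yB) = false.
Proof. exact: lift0F. Qed.
Lemma xB_inj j j' : (xB j == xB j') = (j == j').
Proof. by rewrite /xB !(inj_eq (@lift_inj _ _)). Qed.

Definition gy : expvec N := [ffun i => if i == yB then r.+1 else 0%N].
Definition gxx (jj : 'I_p * 'I_p) : expvec N :=
  [ffun i => ((i == xB jj.1) + (i == xB jj.2))%N].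
Definition gxy (j : 'I_p) : expvec N := [ffun i => ((i == xB j) + (i == yB))%N].
Definition gxz (j : 'I_p) : expvec N := [ffun i => ((i == xB j) + (i == zB) * (s + j))%N].

Definition GB : seq (expvec N) :=
  gy :: ([seq gxx jj | jj <- enum {: 'I_p * 'I_p}] ++
         [seq gxy j | j <- enum 'I_p] ++ [seq gxz j | j <- enum 'I_p]).

Definition stdB (c : expvec N) : Prop :=
  ((forall j, c (xB j) = 0%N) /\ (c yB <= r)%N) \/
  (exists j, [/\ c (xB j) = 1%N, (forall j', j' != j -> c (xB j') = 0%N),
                 c yB = 0%N & (c zB < s + j)%N]).

Lemma mem_gxx jj : gxx jj \in GB.
Proof. by rewrite inE mem_cat map_f ?mem_enum ?orbT. Qed.
Lemma mem_gxy j : gxy j \in GB.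
Proof. by rewrite inE !mem_cat map_f ?orbT ?mem_enum. Qed.
Lemma mem_gxz j : gxz j \in GB.
Proof. by rewrite inE !mem_cat map_f ?orbT ?mem_enum. Qed.

Lemma notin_std c : ~~ in_mideal GB c -> stdB c.
Proof.
move=> /hasPn nd.
have ndiv g : g \in GB -> ~~ mdivides g c by move/nd.
have cy : (c yB <= r)%N.
  rewrite leqNgt; apply: contra (ndiv gy (mem_head _ _)) => h.
  apply/forallP => i; rewrite ffunE; case: eqP => [->|] //.
case: (boolP [exists j, (0 < c (xB j))%N]) => [/existsP [j cj]|nx]; last first.
  left; split => // j; apply/eqP; rewrite -leqn0 leqNgt; apply: contra nx => h.
  by apply/existsP; exists j.
right; exists j; split.
- apply/eqP; rewrite eqn_leq cj andbT leqNgt; apply: contra (ndiv _ (mem_gxx (j, j))) => h.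
  apply/forallP => i; rewrite ffunE /=.
  by case: (eqVneq i (xB j)) => [->|].
- move=> j' nj; apply/eqP; rewrite -leqn0 leqNgt.
  apply: contra (ndiv _ (mem_gxx (j, j'))) => h.
  apply/forallP => i; rewrite ffunE /=.
  case: (eqVneq i (xB j)) => [->|nij]; first by rewrite xB_inj eq_sym (negPf nj).
  by case: (eqVneq i (xB j')) => [->|].
- apply/eqP; rewrite -leqn0 leqNgt; apply: contra (ndiv _ (mem_gxy j)) => h.
  apply/forallP => i; rewrite ffunE /=.
  case: (eqVneq i (xB j)) => [->|nij]; first by rewrite xB_y.
  by case: (eqVneq i yB) => [->|].
- rewrite ltnNge; apply: contra (ndiv _ (mem_gxz j)) => h.
  apply/forallP => i; rewrite ffunE /=.
  case: (eqVneq i (xB j)) => [->|nij]; first by rewrite xB_z mul0n addn0.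
  by case: (eqVneq i zB) => [->|]; rewrite ?mul1n ?mul0n.
Qed.

Lemma std_notin c : stdB c -> ~~ in_mideal GB c.
Proof.
move=> sc; apply/hasPn => g; rewrite inE !mem_cat => /orP[/eqP ->|/or3P[]].
- apply/negP => /forallP /(_ yB); rewrite ffunE eqxx.
  case: sc => [[_ cy]|[j [_ _ -> _]]]; first by rewrite ltnNge cy.
  by [].
- move=> /mapP [[j1 j2] _ ->]; apply/negP => /forallP d.
  have d1 := d (xB j1); have d2 := d (xB j2); rewrite !ffunE /= eqxx in d1 d2.
  case: sc => [[cx _]|[j [c1 c0 _ _]]]; first by move: d1; rewrite cx.
  have e1 : j1 = j.
    by apply/eqP; apply: contraLR d1 => /c0 ->; rewrite -ltnNge.
  have e2 : j2 = j.
    by apply/eqP; apply: contraLR d2 => /c0 ->; rewrite eqxx addn1.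
  by move: d1; rewrite e1 e2 eqxx c1.
- move=> /mapP [j1 _ ->]; apply/negP => /forallP d.
  have d1 := d (xB j1); have d2 := d yB; rewrite !ffunE eqxx in d1 d2.
  case: sc => [[cx _]|[j [c1 c0 cy _]]]; first by move: d1; rewrite cx.
  by move: d2; rewrite eq_sym xB_y cy.
- move=> /mapP [j1 _ ->]; apply/negP => /forallP d.
  have d1 := d (xB j1); have d2 := d zB; rewrite !ffunE eqxx in d1 d2.
  case: sc => [[cx _]|[j [c1 c0 _ cz]]]; first by move: d1; rewrite cx.
  have e1 : j1 = j.
    by apply/eqP; apply: contraLR d1 => /c0 ->; rewrite -ltnNge.
  by move: d2 cz; rewrite eq_sym xB_z e1 mul1n add0n => d2; rewrite ltnNge d2.
Qed.

Lemma mdegB (c : expvec N) :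
  mdeg c = (c yB + (c zB + \sum_(j < p) c (xB j)))%N.
Proof. by rewrite /mdeg !big_ord_recl. Qed.

Lemma big_notin c : ~~ in_mideal GB c -> (r < mdeg c)%N ->
  (forall j, c (xB j) = 0%N) /\ (c yB <= r)%N.
Proof.
move/notin_std => [//|[j [c1 c0 cy cz]]] dc; exfalso.
move: dc; rewrite mdegB cy (bigD1 j) //= big1 ?c1 ?addn0 => [dc|j' nj]; last exact: c0.
have := ltn_ord j; move: dc; rewrite add0n addn1 ltnS => dc jp.
move: (leq_ltn_trans dc cz); rewrite ltn_add2l => /(ltn_trans jp).
by rewrite ltnn.
Qed.

Lemma regB (K : fieldType) : is_reg K GB r%:Z.
Proof.
apply: (@is_reg_gen _ _ _ _ (fun i => i == zB) yB).
- move=> c nc dc; exists zB => //; have [cx cy] := big_notin nc dc.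
  move: dc; rewrite mdegB big1 ?addn0 => [dc|j _]; last exact: cx.
  by rewrite lt0n; apply: contraTneq dc => ->; rewrite addn0 -leqNgt.
- move=> c v nc dc /eqP ->; have [cx cy] := big_notin nc dc.
  apply: std_notin; left; split => [j|]; rewrite ffunE ?xB_z ?cx ?z_y //.
  by rewrite eq_sym z_y addn0.
- apply/hasP; exists gy; first exact: mem_head.
  by apply/forallP => i; rewrite !ffunE.
- apply: std_notin; left; split => [j|]; rewrite ffunE ?xB_y ?eqxx //.
Qed.

Lemma krullB : krull_dim GB 1.
Proof.
split.
  exists [set zB]; split; last by rewrite cards1.
  apply/hasPn => g; rewrite inE !mem_cat => /orP[/eqP ->|/or3P[]].
  - apply/negP => /forallP /(_ yB); rewrite ffunE eqxx inE.
    by rewrite eq_sym z_y.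
  - move=> /mapP [[j1 j2] _ ->]; apply/negP => /forallP /(_ (xB j1)).
    by rewrite ffunE eqxx inE xB_z.
  - move=> /mapP [j1 _ ->]; apply/negP => /forallP /(_ (xB j1)).
    by rewrite ffunE eqxx inE xB_z.
  - move=> /mapP [j1 _ ->]; apply/negP => /forallP /(_ (xB j1)).
    by rewrite ffunE eqxx inE xB_z.
move=> F /hasPn md.
suff : F \subset [set zB] by move/subset_leq_card; rewrite cards1.
apply/subsetP => i iF; rewrite inE; apply/negPn/negP => niz.
case: (unliftP ord0 i) => [i' ei|ei].
  case: (unliftP ord0 i') => [j ej|ej0].
    have := md _ (mem_gxx (j, j)); move/negP; apply.
    apply/forallP => k; apply/implyP; rewrite ffunE /= addnn.
    by case: (eqVneq k (xB j)) => [->|] // _; rewrite /xB -ej -ei.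
  by move: niz; rewrite ei ej0 eqxx.
have := md _ (mem_head _ _); move/negP; apply.
apply/forallP => k; apply/implyP; rewrite ffunE.
by case: (eqVneq k yB) => [->|] // _; rewrite /yB -ei.
Qed.

End FamB.


Lemma card_ge p c : #|[set j : 'I_p | (c <= j)%N]| = (p - c)%N.
Proof.
rewrite -sum1_card big_mkcond.
under eq_bigr => j _ do rewrite inE.
rewrite -(big_mkord xpredT (fun j => if (c <= j)%N then 1%N else 0%N)).
elim: p => [|p IH]; first by rewrite big_geq.
rewrite big_nat_recr // IH /=.
case: (leqP c p) => cp; lia.
Qed.


Section FamBH.
Variables (s p : nat).
Local Notation r := (s + p)%N.
Local Notation N := p.+2.

Lemma caseB (P : 'I_N -> Prop) : P (yB p) -> P (zB p) -> (forall j, P (xB j)) -> forall i, P i.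
Proof.
move=> Py Pz Px i; case: (unliftP ord0 i) => [i' ->|->] //.
by case: (unliftP ord0 i') => [j ->|->] //; apply: Px.
Qed.

Lemma sumB k (x : {ffun 'I_N -> 'I_k.+1}) :
  (\sum_(i < N) (x i : nat) = x (yB p) + (x (zB p) + \sum_(j < p) x (xB j)))%N.
Proof. by rewrite !big_ord_recl. Qed.

Lemma hilbB k : hilbf (GB s p) k =
  ((minn k r).+1 + (if k == 0%N then 0 else p - (k - s)))%N.
Proof.
rewrite /hilbf.
set S := [set x : {ffun 'I_N -> 'I_k.+1} | _].
have memS x : (x \in S) = (\sum_(i < N) (x i : nat) == k)%N && ~~ in_mideal (GB s p) [ffun i => (x i : nat)].
  by rewrite inE.
set B := [set x : {ffun 'I_N -> 'I_k.+1} | [forall j, (x (xB j) : nat) == 0%N]].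
rewrite -(cardsID B S); congr (_ + _)%N.
  pose f1 := fun u : 'I_(minn k r).+1 =>
    [ffun i => if i == yB p then inord u else if i == zB p then inord (k - u) else ord0] : {ffun 'I_N -> 'I_k.+1}.
  have uk (u : 'I_(minn k r).+1) : (u <= k)%N.
    by have := ltn_ord u; rewrite ltnS leq_min => /andP[].
  have f1y u : f1 u (yB p) = inord u by rewrite ffunE eqxx.
  have f1z u : f1 u (zB p) = inord (k - u) by rewrite ffunE z_y eqxx.
  have f1x u j : f1 u (xB j) = ord0 by rewrite ffunE xB_y xB_z.
  have injf : injective f1.
    move=> u u' E; apply: val_inj; move/ffunP: E => /(_ (yB p)).
    by rewrite !f1y => /(congr1 (@nat_of_ord _)); rewrite !inordK // ltnS uk.
  suff -> : S :&: B = f1 @: [set: 'I_(minn k r).+1] by rewrite card_imset // cardsT card_ord.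
  apply/setP => x; rewrite inE memS [x \in B]inE; apply/idP/imsetP.
    move=> /andP[/andP[sx /notin_std sd] /forallP xb].
    have x0 j : (x (xB j) : nat) = 0%N by apply/eqP; exact: xb.
    have sx' : (x (yB p) + x (zB p) = k)%N.
      by move: sx; rewrite sumB big1 ?addn0 ?addnA => [/eqP|j _] //; rewrite x0.
    have yr : (x (yB p) <= r)%N.
      case: sd => [[_]|[j [h _ _ _]]]; first by rewrite ffunE.
      by move: h; rewrite ffunE x0.
    have xk : (x (yB p) <= k)%N by move: (leq_addr (x (zB p)) (x (yB p))); rewrite sx'.
    have yl : (x (yB p) < (minn k r).+1)%N by rewrite ltnS leq_min yr xk.
    exists (Ordinal yl); first by rewrite inE.
    apply/ffunP; apply: caseB => [|| j]; rewrite ?f1y ?f1z ?f1x; apply: val_inj.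
    - by rewrite /= inordK // ltnS.
    - rewrite /= inordK ?ltnS ?leq_subr //; apply/eqP.
      by rewrite eq_sym -(eqn_add2l (x (yB p))) subnKC // sx'.
    - by rewrite /= x0.
  move=> [u _ ->]; apply/andP; split; last by apply/forallP => j; rewrite f1x.
  apply/andP; split.
    rewrite sumB f1y f1z big1 => [|j _]; last by rewrite f1x.
    by rewrite addn0 !inordK ?ltnS ?leq_subr ?uk // subnKC ?uk.
  apply: std_notin; left; split => [j|]; rewrite ffunE ?f1x //.
  rewrite f1y inordK ?ltnS ?uk //.
  by have := ltn_ord u; rewrite ltnS leq_min => /andP[].
pose f2 := fun j : 'I_p =>
  [ffun i => if i == xB j then inord 1 else if i == zB p then inord k.-1 else ord0] : {ffun 'I_N -> 'I_k.+1}.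
pose A := [set j : 'I_p | (0 < k)%N && (k <= s + j)%N].
have cA : #|A| = (if k == 0%N then 0 else p - (k - s))%N.
  rewrite /A; case: (posnP k) => [k0|kpos].
    by rewrite k0 /=; apply/eqP; rewrite cards_eq0; apply/eqP/setP => j; rewrite !inE.

  by rewrite -card_ge; apply: eq_card => j; rewrite !inE leq_subLR.
rewrite -cA.
have f2x j j' : f2 j (xB j') = if j' == j then inord 1 else ord0.
  by rewrite ffunE xB_inj xB_z; case: eqP.
have f2y j : f2 j (yB p) = ord0 by rewrite ffunE eq_sym xB_y eq_sym z_y.
have f2z j : f2 j (zB p) = inord k.-1 by rewrite ffunE eq_sym xB_z eqxx.
have injf : {in A &, injective f2}.
  move=> j j'; rewrite !inE => /andP[k0 _] _ E.
  move/ffunP: E => /(_ (xB j)); rewrite !f2x eqxx.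
  case: eqP => // nj /(congr1 (@nat_of_ord _)); rewrite inordK // ltnS.
rewrite -(card_in_imset injf).
suff -> : S :\: B = f2 @: A by [].
apply/setP => x; rewrite inE memS [x \in B]inE.
apply/idP/imsetP.
  move=> /andP[nb /andP[sx /notin_std sd]].
  case: sd => [[cx _]|[j [c1 c0 cy cz]]].
    by exfalso; move/forallP: nb; apply => j; move: (cx j); rewrite ffunE => ->.
  move: c1 c0 cy cz; rewrite !ffunE => c1 c0 cy cz.
  have sx' : (x (zB p) + 1 = k)%N.
    move: sx; rewrite sumB cy add0n (bigD1 j) //= big1 ?addn0 ?c1 => [/eqP //|j' nj].
    by have := c0 j' nj; rewrite ffunE.
  exists j.
    by rewrite inE; apply/andP; split; lia.
  apply/ffunP; apply: caseB => [|| j']; rewrite ?f2y ?f2z ?f2x; apply: val_inj.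
  - by rewrite /= cy.
  - have kpos : (0 < k)%N by lia.
    rewrite /= inordK ?ltnS ?leq_pred //; apply/eqP.
    by rewrite -(eqn_add2r 1) sx' addn1 prednK.
  - case: eqP => [->|nj]; first by rewrite /= inordK ?c1 // -sx' addn1 ltnS ltn0Sn.
    by have := c0 j' (introN eqP nj); rewrite ffunE.
move=> [j]; rewrite inE => /andP[k0 kj] ->.
apply/andP; split.
  apply/negP => /forallP /(_ j); rewrite f2x eqxx inordK //.
apply/andP; split.
  rewrite sumB f2y f2z (bigD1 j) //= f2x eqxx big1 => [|j' nj]; last by rewrite f2x (negPf nj).
  by rewrite !inordK ?addn0 ?add0n ?addn1 ?prednK // ltnS leq_pred.
apply: std_notin; right; exists j; split.
- by rewrite ffunE f2x eqxx inordK.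
- by move=> j' nj; rewrite ffunE f2x (negPf nj).
- by rewrite ffunE f2y.
- rewrite ffunE f2z inordK ?ltnS ?leq_pred //.
  by rewrite -ltnS prednK.
Qed.
End FamBH.


Definition hB (s p : nat) : {poly int} :=
  \poly_(i < s.+1) (if i == 0%N then 1 else if i == 1%N then (p.+1)%:R else 1).

Lemma hpolyB s p : (1 <= s)%N -> is_hpoly (GB s p) (hB s p).
Proof.
move=> s1; exists 1%N; split; first exact: krullB.
move=> m.
apply: (@eq_trans _ _ (Ssum 1 (fun k => (hilbf (GB s p) k)%:Z) m)); last by [].
rewrite Ssum_S (@Dl_ext _ (fun k => (hilbf (GB s p) k)%:Z)); last by move=> x; rewrite Ssum0.
rewrite coef_poly; case: m => [|m] /=.
  by rewrite hilbB min0n.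
rewrite !hilbB /=.
case: m => [|m] /=.
  by rewrite ltnS s1 natz; lia.
case: ifP => hm; lia.
Qed.

Lemma size_hB s p : (1 <= s)%N -> (size (hB s p)).-1 = s.
Proof.
move=> s1; rewrite size_poly_eq //.
by case: s s1 => [|[|s]] //= _; rewrite ?natz ?oner_eq0.
Qed.

Unset Implicit Arguments.

Theorem theorem0p2 (K : fieldType) (r s : nat) :
  (1 <= r)%N -> (1 <= s)%N ->
  exists (n : nat) (G : seq (expvec n)),
    is_reg K G r%:Z /\
    exists h : {poly int}, is_hpoly G h /\ (size h).-1 = s.
Proof.
move=> r1 s1; case: (leqP r s) => rs.
  exists (s - r).+1, (GA (s - r) r); split; first exact: regA.
  exists (hA (s - r) r); split; first exact: hpolyA.
  by rewrite size_hA // subnKC.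
exists (r - s).+2, (GB s (r - s)); split.
  by have := regB s (r - s) K; rewrite subnKC // ltnW.
exists (hB s (r - s)); split; first exact: hpolyB.
exact: size_hB.
Qed.
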